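(* Let $k$ be a field and $n\in\mathbb{Z}$. Let $(x,y)\in k^2$. Then $f_n(x,y)=0$ and $x^2-y-2=0$ hold simultaneously if and only if $n\neq0$ in $k$, $y=2-\frac1n$ and $x^2=4-\frac1n$; that is, the common zeros are the points $(\pm\sqrt{4-\frac1n},\,2-\frac1n)$ (when such square roots exist in $k$), and there are none if $n=0$ in $k$.
   Context: $\mathcal{S}_n(z)\in\mathbb{Z}[z]$ ($n\in\mathbb{Z}$) are the Chebyshev polynomials of the second kind defined by $\mathcal{S}_0=0$, $\mathcal{S}_1=1$, $\mathcal{S}_{n+1}=z\mathcal{S}_n-\mathcal{S}_{n-1}$ for all $n\in\mathbb{Z}$ (so that $\mathcal{S}_n(2\cos\theta)=\sin n\theta/\sin\theta$). Put $z=z(x,y)=2x^2-x^2y+y^2-2$ and $f_n(x,y)=(y-1)\mathcal{S}_n(z)-\mathcal{S}_{n-1}(z)$. *)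

(* Defs.v *)
From mathcomp Require Import all_boot all_order all_algebra.
Set Implicit Arguments. Unset Strict Implicit. Unset Printing Implicit Defensive.
Import Order.TTheory GRing.Theory Num.Theory.
Local Open Scope ring_scope.

(* Chebyshev polynomials of the second kind S_n, evaluated at z in a ring R:
   S_0 = 0, S_1 = 1, S_{n+1} = z S_n - S_{n-1}.
   chebS_pair n z = (S_n(z), S_{n+1}(z)) for n : nat. *)
Fixpoint chebS_pair (R : nzRingType) (n : nat) (z : R) : R * R :=
  match n with
  | 0%N => (0, 1)
  | n'.+1 => let: (a, b) := chebS_pair n' z in (b, z * b - a)
  end.

(* Extension to all integers: the recurrence forces S_{-n} = - S_n. *)
Definition chebS (R : nzRingType) (n : int) (z : R) : R :=
  match n with
  | Posz m => (chebS_pair m z).1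
  | Negz m => - (chebS_pair m.+1 z).1
  end.

Definition zxy (R : nzRingType) (x y : R) : R := 2 * x ^+ 2 - x ^+ 2 * y + y ^+ 2 - 2.

Definition f_n (R : nzRingType) (n : int) (x y : R) : R :=
  (y - 1) * chebS n (zxy x y) - chebS (n - 1) (zxy x y).

(* Main.v *)
Require Import Defs.
From mathcomp Require Import all_boot all_order all_algebra.
From mathcomp Require Import ring.
Import Order.TTheory GRing.Theory Num.Theory.
Local Open Scope ring_scope.

Lemma pair2 (k : fieldType) (m : nat) : chebS_pair m (2 : k) = (m%:R, m.+1%:R).
Proof.
elim: m => [|m IH] /=; first by rewrite mulr1n.
rewrite IH; congr pair.
rewrite -!natr1; ring.
Qed.

Lemma cheb2 (k : fieldType) (n : int) : chebS n (2 : k) = n%:~R.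
Proof.
case: n => m /=; rewrite pair2 //=.

Qed.

Theorem proposition9p1 (k : fieldType) (n : int) (x y : k) :
  (f_n n x y = 0 /\ x ^+ 2 - y - 2 = 0) <->
  [/\ (n%:~R : k) != 0, y = 2 - (n%:~R)^-1 & x ^+ 2 = 4 - (n%:~R)^-1].
Proof.
have key : x ^+ 2 = y + 2 -> f_n n x y = n%:~R * (y - 2) + 1.
  move=> hx; rewrite /f_n.
  have -> : zxy x y = 2 by rewrite /zxy hx; ring.
  rewrite !cheb2 intrD /=; ring.
split.
  case=> hf hx.
  have hx' : x ^+ 2 = y + 2 by apply/eqP; rewrite -subr_eq0 -hx; apply/eqP; ring.
  move: hf; rewrite key // => h.
  have hn : (n%:~R : k) != 0.
    by apply/negP => /eqP h0; move: h; rewrite h0 mul0r add0r; apply/eqP; exact: oner_neq0.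
  have hy : y = 2 - (n%:~R)^-1.
    apply: (mulfI hn); rewrite mulrBr mulfV //.
    by apply/eqP; rewrite -subr_eq0; apply/eqP; rewrite -h; ring.
  split => //; rewrite hx' hy; ring.
case=> hn hy hx.
have hx' : x ^+ 2 = y + 2 by rewrite hx hy; ring.
split; last by rewrite hx' ; ring.
rewrite key // hy.
by field.
Qed.
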